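(* Let $R$ be an integral domain, $Q$ a prime ideal of $R[X]$, and $p = Q\cap R$. If $p^t$ is $p$-primary (equivalently $p^t = p^{(t)} = p^tR_p\cap R$) for all $t\geq 1$, then $Q$ is power stable.
   Context: An ideal $I$ of the polynomial ring $R[X]$ over an integral domain $R$ is called power stable if $I^t\cap R = (I\cap R)^t$ for all integers $t\geq 1$. *)

(* Defs.v *)
From HB Require Import structures.
From mathcomp Require Import all_boot all_order all_algebra.
Set Implicit Arguments. Unset Strict Implicit. Unset Printing Implicit Defensive.
Import GRing.Theory.
Local Open Scope ring_scope.

Section Ideals.
Variable A : comRingType.

Definition is_ideal (I : A -> Prop) : Prop :=
  [/\ I 0,
      (forall x y, I x -> I y -> I (x + y)) &
      (forall r x, I x -> I (r * x))].

Definition prime_ideal (I : A -> Prop) : Prop :=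
  [/\ is_ideal I, ~ I 1 &
      (forall a b, I (a * b) -> I a \/ I b)].

Definition ideal_mul (I J : A -> Prop) : A -> Prop :=
  fun z => exists s : seq (A * A),
    (forall p, p \in s -> I p.1 /\ J p.2) /\ z = \sum_(p <- s) p.1 * p.2.

Fixpoint ideal_pow (I : A -> Prop) (t : nat) : A -> Prop :=
  match t with
  | 0%N => fun _ => True
  | t'.+1 => ideal_mul (ideal_pow I t') I
  end.

Definition ideal_rad (I : A -> Prop) : A -> Prop :=
  fun x => exists n : nat, I (x ^+ n).

Definition primary_ideal (q : A -> Prop) : Prop :=
  [/\ is_ideal q, ~ q 1 &
      (forall a b, q (a * b) -> ~ q a -> ideal_rad q b)].

Definition P_primary (q P : A -> Prop) : Prop :=
  primary_ideal q /\ (forall x, ideal_rad q x <-> P x).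

End Ideals.

Definition contract (R : idomainType) (I : {poly R} -> Prop) : R -> Prop :=
  fun r => I r%:P.

Definition power_stable (R : idomainType) (I : {poly R} -> Prop) : Prop :=
  forall t : nat, (1 <= t)%N ->
    forall r : R, contract (ideal_pow I t) r <-> ideal_pow (contract I) t r.

(* Main.v *)
Require Import Defs.
From HB Require Import structures.
From mathcomp Require Import all_boot all_order all_algebra.
From Stdlib Require Import Classical Lia.
Set Implicit Arguments. Unset Strict Implicit. Unset Printing Implicit Defensive.
Import GRing.Theory.
Local Open Scope ring_scope.

Section IdealLemmas.
Variable A : comRingType.
Implicit Types I J : A -> Prop.

Lemma im0 I J : ideal_mul I J 0.
Proof. by exists [::]; split => //; rewrite big_nil. Qed.

Lemma imD I J x y : ideal_mul I J x -> ideal_mul I J y -> ideal_mul I J (x + y).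
Proof.
move=> [s1 [H1 ->]] [s2 [H2 ->]]; exists (s1 ++ s2); split; last by rewrite big_cat.
by move=> q; rewrite mem_cat => /orP[/H1|/H2].
Qed.

Lemma im1 I J x y : I x -> J y -> ideal_mul I J (x * y).
Proof.
by move=> Ix Jy; exists [:: (x, y)]; split; [move=> q; rewrite inE => /eqP -> | rewrite big_seq1].
Qed.

Lemma imM I J : (forall r x, I x -> I (r * x)) ->
  forall r x, ideal_mul I J x -> ideal_mul I J (r * x).
Proof.
move=> HI r x [s [Hs ->]]; exists [seq (r * q.1, q.2) | q <- s]; split.
  move=> q /mapP [q' /Hs [h1 h2] ->] /=; split => //; exact: HI.
by rewrite big_map mulr_sumr; apply: eq_bigr => q _; rewrite mulrA.
Qed.

Lemma pow_ideal I t : is_ideal (ideal_pow I t).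
Proof.
elim: t => [|t [_ _ IH]] /=; first by split.
split; [exact: im0 | exact: imD | exact: imM].
Qed.

Lemma coef_mul_im I J (c d : {poly A}) : (forall i, I c`_i) -> (forall i, J d`_i) ->
  forall k, ideal_mul I J (c * d)`_k.
Proof.
move=> Hc Hd k; rewrite coefM; apply: (big_ind (ideal_mul I J)).
- exact: im0.
- exact: imD.
- by move=> i _; apply: im1.
Qed.
End IdealLemmas.

Section Poly.
Variable R : idomainType.
Implicit Types (g h c : {poly R}) (I : R -> Prop).

Lemma pdiv_ex g : (0 < size g)%N -> forall n h, (size h <= n)%N ->
  exists m q r, (lead_coef g ^+ m)%:P * h = q * g + r /\ (size r < size g)%N /\
    (forall I, is_ideal I -> (forall i, I h`_i) -> forall i, I r`_i).
Proof.
move=> g0; set s := lead_coef g.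
elim=> [|n IH] h hn.
  exists 0%N, 0, h; rewrite expr0 mul1r mul0r add0r; split=> //.
  by split => //; apply: leq_ltn_trans hn g0.
case: (ltnP (size h) (size g)) => hg.
  by exists 0%N, 0, h; rewrite expr0 mul1r mul0r add0r.
set c := lead_coef h; set k := (size h - size g)%N.
set h' := s%:P * h - c%:P * ('X^k * g).
have ch' : forall j, h'`_j = s * h`_j - c * (if (j < k)%N then 0 else g`_(j - k)).
  by move=> j; rewrite /h' coefB !coefCM coefXnM.
have sh' : (size h' <= n)%N.
  apply/leq_sizeP => j hj; rewrite ch'.
  have hk : (k <= j)%N.
    apply: leq_trans _ hj; rewrite /k leq_subLR; apply: leq_trans hn _.
    by rewrite -add1n leq_add2r.
  rewrite ltnNge hk /=.
  move: hj; rewrite leq_eqVlt => /orP[/eqP <-|jn]; last first.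
    have -> : h`_j = 0 by move/leq_sizeP: hn; apply.
    have -> : g`_(j - k) = 0.
      move/leq_sizeP: (leqnn (size g)); apply.
      by rewrite leq_subRL // /k subnK // (leq_trans hn jn).
    by rewrite !mulr0 subrr.
  have [e|lt] : size h = n.+1 \/ (size h < n.+1)%N.
    by move: hn; rewrite leq_eqVlt => /orP[/eqP|]; [left|right].
    have -> : (n - k = (size g).-1)%N.
      rewrite /k e; move: hg g0; rewrite e; move: (size g) => a h2 h1.
      move/leP: h1; move/leP: h2 => h1 h2. rewrite -!minusE. lia.
    by rewrite /c /s !lead_coefE e /= mulrC subrr.
  have -> : h`_n = 0 by move/leq_sizeP: (lt); apply.
  have -> : g`_(n - k) = 0.
    move/leq_sizeP: (leqnn (size g)); apply.
    rewrite /k; move: lt hg; move: (size g) (size h) => a b h1 h2.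
    move/leP: h1; move/leP: h2 => h1 h2. rewrite -!minusE. apply/leP. lia.
  by rewrite !mulr0 subrr.
have [m [q [r [Heq [Hr HI]]]]] := IH h' sh'.
exists m.+1, (q + (s ^+ m * c)%:P * 'X^k), r; split; last split => //.
  have e : s%:P * h = h' + c%:P * ('X^k * g) by rewrite /h' subrK.
  rewrite exprSr polyCM -mulrA e mulrDr Heq mulrDl polyCM -!mulrA.
  by rewrite addrAC.
move=> I [I0 ID IM] Hh; apply: HI => // j.
have Hc : I c by rewrite /c lead_coefE.
rewrite ch'; apply: ID; first exact: IM.
have -> : - (c * (if (j < k)%N then 0 else g`_(j - k))) = (- (if (j < k)%N then 0 else g`_(j - k))) * c.
  by rewrite mulrC mulNr.
exact: IM.
Qed.

Definition Sx (s : R) g (J : R -> Prop) h :=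
  exists N H c, (s ^+ N)%:P * h = c + g * H /\ forall i, J c`_i.

Lemma Sx_add s g J h1 h2 : is_ideal J -> Sx s g J h1 -> Sx s g J h2 -> Sx s g J (h1 + h2).
Proof.
move=> [J0 JD JM] [N1 [H1 [c1 [e1 C1]]]] [N2 [H2 [c2 [e2 C2]]]].
exists (N1 + N2)%N, ((s ^+ N2)%:P * H1 + (s ^+ N1)%:P * H2),
  ((s ^+ N2)%:P * c1 + (s ^+ N1)%:P * c2); split.
  have -> : (s ^+ (N1 + N2))%:P * (h1 + h2) =
    (s ^+ N2)%:P * ((s ^+ N1)%:P * h1) + (s ^+ N1)%:P * ((s ^+ N2)%:P * h2).
    by rewrite exprD polyCM mulrDr !mulrA [(s ^+ N2)%:P * _]mulrC.
  rewrite e1 e2 !mulrDr [g * (_ * H1)]mulrCA [g * (_ * H2)]mulrCA.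
  by rewrite addrACA.
by move=> i; rewrite coefD !coefCM; apply: JD; apply: JM.
Qed.

Lemma Sx_mul s g J K h1 h2 : is_ideal J -> Sx s g J h1 -> Sx s g K h2 ->
  Sx s g (ideal_mul J K) (h1 * h2).
Proof.
move=> [J0 JD JM] [N1 [H1 [c1 [e1 C1]]]] [N2 [H2 [c2 [e2 C2]]]].
exists (N1 + N2)%N, (c1 * H2 + H1 * (c2 + g * H2)), (c1 * c2); split.
  rewrite exprD polyCM mulrACA e1 e2 mulrDl mulrDr.
  rewrite [c1 * (g * H2)]mulrCA -[g * H1 * _]mulrA -addrA -mulrDr.
  by [].
exact: coef_mul_im.
Qed.

Lemma expand (Q : {poly R} -> Prop) I g s :
  (forall h, Q h -> Sx s g I h) ->
  forall t h, ideal_pow Q t h -> Sx s g (ideal_pow I t) h.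
Proof.
move=> HQ; elim=> [|t IH] h /=.
  by move=> _; exists 0%N, 0, h; rewrite expr0 polyC1 mul1r mulr0 addr0.
move=> [l [Hl ->]]; elim: l Hl => [|q l IHl] Hl.
  exists 0%N, 0, 0; split; first by rewrite big_nil !mulr0 addr0.
  by move=> i; rewrite coef0; apply: im0.
rewrite big_cons; apply: Sx_add; first exact: (pow_ideal _ t.+1).
  have [h1 h2] := Hl q (mem_head _ _).
  apply: Sx_mul; [exact: pow_ideal | exact: IH | exact: HQ].
by apply: IHl => q' hq'; apply: Hl; rewrite inE hq' orbT.
Qed.

Lemma fin_step g J (N : nat) H c a : (1 < size g)%N -> is_ideal J ->
  (lead_coef g ^+ N)%:P * a%:P = c + g * H -> (forall i, J c`_i) ->
  exists m, J (lead_coef g ^+ m * a).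
Proof.
set s := lead_coef g.
move=> g1 HJ e Hc.
have g0 : (0 < size g)%N by apply: ltnW.
have [k [q [r [er [sr Hr]]]]] := pdiv_ex g0 (leqnn (size c)).
have Hr' := Hr J HJ Hc.
exists (k + N)%N.
have eD : (s ^+ (k + N) * a)%:P - r = g * (q + (s ^+ k)%:P * H).
  rewrite exprD -mulrA !polyCM e mulrDr er addrAC addrK.
  by rewrite mulrDr [q * g]mulrC mulrCA.
have Y0 : q + (s ^+ k)%:P * H = 0.
  apply/eqP; apply: contraT => nz.
  have gnz : g != 0 by rewrite -size_poly_gt0.
  have := size_mul gnz nz; rewrite -eD => hs.
  have : (size ((s ^+ (k + N) * a)%:P - r)%R < size g)%N.
    apply: leq_ltn_trans (size_polyD _ _) _; rewrite size_polyN gtn_max sr andbT.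
    exact: leq_ltn_trans (size_polyC_leq1 _) g1.
  rewrite hs; rewrite -size_poly_gt0 in nz; move: nz.
  case: (size (q + _)) => // n _; rewrite addnS /= ltnNge leq_addr //.
move: eD; rewrite Y0 mulr0 => /eqP; rewrite subr_eq0 => /eqP E.
by move: (Hr' 0%N); rewrite -E coefC.
Qed.
End Poly.

Lemma min_ex (P : nat -> Prop) : (exists n, P n) ->
  exists n, P n /\ forall m, (m < n)%N -> ~ P m.
Proof.
move=> [n Pn]; apply: NNPP => H.
have : forall n m, (m <= n)%N -> ~ P m.
  elim=> [|k IH] m hm Pm.
    apply: H; exists m; split => // m' hm'.
    by move: hm; rewrite leqn0 => /eqP E; rewrite E in hm'.
  apply: H; exists m; split => // m' hm'; apply: IH.
  by rewrite -ltnS (leq_trans hm' hm).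
by move=> /(_ n n (leqnn n)).
Qed.

Lemma contract_pow (R : idomainType) (Q : {poly R} -> Prop) t r :
  ideal_pow (contract Q) t r -> ideal_pow Q t r%:P.
Proof.
elim: t r => [|t IH] r //= [l [Hl ->]].
exists [seq (q.1%:P, q.2%:P) | q <- l]; split.
  by move=> q /mapP [q' /Hl [h1 h2] ->] /=; split => //; apply: IH.
by rewrite big_map rmorph_sum; apply: eq_bigr => q _ /=; rewrite rmorphM.
Qed.

Theorem mainTheorem13 (R : idomainType) (Q : {poly R} -> Prop) :
  prime_ideal Q ->
  (forall t : nat, (1 <= t)%N -> P_primary (ideal_pow (contract Q) t) (contract Q)) ->
  power_stable Q.
Proof.
move=> [[Q0 QD QM] Q1 Qp] Hprim t t1 a; split; last exact: contract_pow.
set p := contract Q.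
have p0 : p 0 by rewrite /p /contract polyC0.
have pI : is_ideal p.
  split => //; first by move=> x y hx hy; rewrite /p /contract polyCD; apply: QD.
  by move=> r x hx; rewrite /p /contract polyCM; apply: QM.
have pX : forall s m, p (s ^+ m) -> p s.
  move=> s; elim=> [|m IH]; first by rewrite expr0 /p /contract polyC1.
  by rewrite exprS /p /contract polyCM => /Qp [] // /IH.
have Qneg : forall x, Q x -> Q (- x) by move=> x hx; rewrite -mulN1r; apply: QM.
move=> Ha.
have fin : forall s, ~ p s -> (exists m, ideal_pow p t (s ^+ m * a)) -> ideal_pow p t a.
  move=> s ps [m Hm]; have [[_ _ Hpr] Hrad] := Hprim t t1.
  apply: NNPP => na; apply: ps; apply: (pX s m); apply/Hrad.
  by apply: Hpr na; rewrite mulrC.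
case: (classic (exists h, Q h /\ exists i, ~ p h`_i)) => [Hex|Hnex]; last first.
  have Hg : forall h, Q h -> Sx 1 0 p h.
    move=> h hh; exists 0%N, 0, h; split; first by rewrite expr0 polyC1 mul1r mulr0 addr0.
    by move=> i; apply: NNPP => ni; apply: Hnex; exists h; split => //; exists i.
  have [N [H [c [e Hc]]]] := expand Hg Ha.
  rewrite mul0r addr0 expr1n polyC1 mul1r in e.
  by move: (Hc 0%N); rewrite -e coefC.
have Hex' : exists n, exists h, Q h /\ (exists i, ~ p h`_i) /\ size h = n.
  by case: Hex => h [hh hi]; exists (size h), h.
have [n [[g [Qg [[i gi] sg]]] Hmin]] :=
  @min_ex (fun n => exists h, Q h /\ (exists i, ~ p h`_i) /\ size h = n) Hex'.
have Hmin' : forall h, Q h -> (size h < size g)%N -> forall j, p h`_j.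
  move=> h hh hs j; apply: NNPP => nj; apply: (Hmin (size h)); first by rewrite -sg.
  by exists h; split => //; split => //; exists j.
set s := lead_coef g.
have ig : (i < size g)%N.
  rewrite ltnNge; apply/negP => hi; apply: gi.
  by move/leq_sizeP: hi => /(_ i (leqnn i)) ->.
have ps : ~ p s.
  move=> ls.
  set g' := g - s%:P * 'X^((size g).-1).
  have Qg' : Q g' by apply: QD => //; apply: Qneg; rewrite mulrC; apply: QM.
  have cg' : forall j, g'`_j = g`_j - s * (j == (size g).-1)%:R.
    by move=> j; rewrite /g' coefB coefCM coefXn.
  have sg' : (size g' < size g)%N.
    have gpos : (0 < size g)%N by apply: leq_ltn_trans ig.
    apply: (@leq_trans (size g).-1.+1); last by rewrite prednK.
    rewrite ltnS; apply/leq_sizeP => j hj; rewrite cg'.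
    move: hj; rewrite leq_eqVlt => /orP[/eqP <-|hj].
      by rewrite eqxx mulr1 /s lead_coefE subrr.
    rewrite (gtn_eqF hj) mulr0 subr0.
    by move/leq_sizeP: (leqnn (size g)); apply; rewrite -(prednK gpos).
  apply: gi; move: (Hmin' g' Qg' sg' i); rewrite cg'.
  case: eqP => [E|_]; last by rewrite mulr0 subr0.
  by move=> _; rewrite E -lead_coefE.
have g1 : (1 < size g)%N.
  rewrite ltnNge; apply/negP => h1; apply: ps.
  rewrite /s lead_coefE; have -> : (size g).-1 = 0%N by case: (size g) h1 => [|[]].
  by rewrite /p /contract -size1_polyC.
have Hg : forall h, Q h -> Sx s g p h.
  move=> h hh.
  have [m [q [r [er [sr _]]]]] := pdiv_ex (ltnW g1) (leqnn (size h)).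
  have Qr : Q r.
    have -> : r = (s ^+ m)%:P * h - q * g by rewrite er addrAC subrr add0r.
    by apply: QD; [apply: QM | apply: Qneg; apply: QM].
  exists m, q, r; split; first by rewrite er addrC mulrC.
  exact: Hmin'.
have [N [H [c [e Hc]]]] := expand Hg Ha.
apply: (fin s ps); apply: (fin_step g1 _ e Hc).
exact: pow_ideal.
Qed.
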